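(* Let $m\ge2$ be an integer, $\theta=1-1/m$, $\theta<\mu<1$, and let $Z$ be distributed as $\theta-B$ where $B$ is Bernoulli with mean $\mu$. Let $\gamma>0$ be the Lundberg coefficient of $Z$, i.e. the positive solution of $\mathbb{E}[\exp(\gamma Z)]=1$. Then $$\frac{m}{m-1}\log\Bigl(\frac{\mu}{(1-\mu)(m-1)}\Bigr)\le\gamma\le\frac{2m}{m-1}\log\Bigl(\frac{\mu}{(1-\mu)(m-1)}\Bigr).$$ *)

(* Defs.v *)
From Stdlib Require Import Reals.
Open Scope R_scope.

(* Moment generating function E[exp(g Z)] of Z = theta - B, B ~ Bernoulli(mu):
   Z = theta with probability 1 - mu, Z = theta - 1 with probability mu. *)
Definition mgf_theta_minus_bernoulli (theta mu g : R) : R :=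
  (1 - mu) * exp (g * theta) + mu * exp (g * (theta - 1)).

(* Main.v *)
Require Import Defs.
From Stdlib Require Import Reals.
From Stdlib Require Import Lra Lia.
Open Scope R_scope.

Fixpoint F (u : R) (n : nat) : R :=
  match n with O => 0 | S k => F u k + exp (INR (S k) * u) end.

Lemma ln_le' x y : 0 < x -> x <= y -> ln x <= ln y.
Proof. intros Hx [H|H]. left; apply ln_increasing; auto. subst; lra. Qed.

Lemma exp_le' x y : x <= y -> exp x <= exp y.
Proof. intros [H|H]. left; apply exp_increasing; auto. subst; lra. Qed.

Lemma F_geom u n : (exp u - 1) * (1 + F u n) = exp (INR (S n) * u) - 1.
Proof.
  induction n as [|n IH].
  - simpl. replace (1 * u) with u by ring. ring.
  - change (F u (S ?k)) with (F u k + exp (INR (S k) * u)). replace ((exp u - 1) * (1 + (F u n + exp (INR (S n) * u))))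
      with ((exp u - 1) * (1 + F u n) + (exp u - 1) * exp (INR (S n) * u)) by ring.
    rewrite IH.
    replace (INR (S (S n)) * u) with (u + INR (S n) * u)
      by (rewrite (S_INR (S n)); ring).
    rewrite exp_plus. ring.
Qed.

Lemma F_up u n : 0 <= u -> F u n <= INR n * exp (INR n * u).
Proof.
  intros Hu. induction n as [|n IH].
  - simpl; lra.
  - change (F u (S ?k)) with (F u k + exp (INR (S k) * u)). rewrite S_INR.
    assert (exp (INR n * u) <= exp ((INR n + 1) * u)) by (apply exp_le'; nra).
    assert (0 <= INR n) by apply pos_INR.
    rewrite <- S_INR in *. rewrite S_INR in H |- *. nra.
Qed.

Lemma F_low u c n :
  exp c * (INR n + u * INR n * (INR n + 1) / 2 - INR n * c) <= F u n.
Proof.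
  induction n as [|n IH].
  - simpl; lra.
  - change (F u (S ?k)) with (F u k + exp (INR (S k) * u)).
    assert (H : exp c * (1 + (INR (S n) * u - c)) <= exp (INR (S n) * u)).
    { replace (exp (INR (S n) * u)) with (exp c * exp (INR (S n) * u - c))
        by (rewrite <- exp_plus; f_equal; ring).
      apply Rmult_le_compat_l. left; apply exp_pos. apply exp_ineq1_le. }
    rewrite S_INR in *. nra.
Qed.

Theorem lemma5 (m : nat) (mu gamma : R) :
  (2 <= m)%nat ->
  1 - 1 / INR m < mu -> mu < 1 ->
  0 < gamma ->
  mgf_theta_minus_bernoulli (1 - 1 / INR m) mu gamma = 1 ->
  INR m / (INR m - 1) * ln (mu / ((1 - mu) * (INR m - 1))) <= gamma /\
  gamma <= 2 * INR m / (INR m - 1) * ln (mu / ((1 - mu) * (INR m - 1))).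
Proof.
  intros Hm Hmu1 Hmu2 Hg Heq.
  destruct m as [|n]; [lia|].
  assert (Hn1 : 1 <= INR n) by (apply (le_INR 1); lia).
  rewrite S_INR in *.
  replace (INR n + 1 - 1) with (INR n) by ring.
  set (u := gamma / (INR n + 1)).
  assert (Hu : 0 < u) by (unfold u; apply Rdiv_lt_0_compat; lra).
  assert (Hgu : gamma = (INR n + 1) * u) by (unfold u; field; lra).
  unfold mgf_theta_minus_bernoulli in Heq.
  replace (gamma * (1 - 1 / (INR n + 1))) with (INR n * u) in Heq
    by (rewrite Hgu; field; lra).
  replace (gamma * (1 - 1 / (INR n + 1) - 1)) with (- u) in Heq
    by (rewrite Hgu; field; lra).
  rewrite exp_Ropp in Heq.
  assert (Heu : 1 < exp u).
  { pose proof (exp_ineq1 u); lra. }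
  assert (Hexp : exp (INR (S n) * u) = exp u * exp (INR n * u)).
  { rewrite <- exp_plus; f_equal; rewrite S_INR; ring. }
  assert (HF : (1 - mu) * (1 + F u n) = 1).
  { pose proof (F_geom u n) as G. rewrite Hexp in G.
    assert (E2 : (1 - mu) * exp u * exp (INR n * u) + mu = exp u).
    { assert (exp u <> 0) by lra.
      transitivity (exp u * ((1 - mu) * exp (INR n * u) + mu * / exp u)).
      field; auto. rewrite Heq; ring. }
    apply (Rmult_eq_reg_l (exp u - 1)); [|lra].
    replace ((exp u - 1) * ((1 - mu) * (1 + F u n))) with
       ((1 - mu) * ((exp u - 1) * (1 + F u n))) by ring.
    rewrite G. nra. }
  assert (Hq : mu / ((1 - mu) * INR n) = F u n / INR n).
  { assert (HF' : F u n = mu / (1 - mu)).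
    { apply (Rmult_eq_reg_l (1 - mu)); [|lra]. field_simplify; lra. }
    rewrite HF'. field. lra. }
  rewrite Hq.
  assert (HFpos : 0 < F u n).
  { pose proof (F_low u 0 n). rewrite exp_0 in H. nra. }
  assert (HFn : 0 < F u n / INR n) by (apply Rdiv_lt_0_compat; lra).
  split.
  - assert (L : ln (F u n / INR n) <= INR n * u).
    { rewrite <- (ln_exp (INR n * u)). apply ln_le'; auto.
      pose proof (F_up u n ltac:(lra)).
      apply (Rmult_le_reg_r (INR n)); [lra|].
      unfold Rdiv. rewrite Rmult_assoc, Rinv_l; lra. }
    apply (Rmult_le_reg_r (INR n / (INR n + 1))).
    { apply Rdiv_lt_0_compat; lra. }
    replace ((INR n + 1) / INR n * ln (F u n / INR n) * (INR n / (INR n + 1)))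
      with (ln (F u n / INR n)) by (field; lra).
    replace (gamma * (INR n / (INR n + 1))) with (INR n * u) by (rewrite Hgu; field; lra).
    exact L.
  - assert (L : INR n * u / 2 <= ln (F u n / INR n)).
    { rewrite <- (ln_exp (INR n * u / 2)) at 1. apply ln_le'. apply exp_pos.
      pose proof (F_low u (INR n * u / 2) n) as H.
      pose proof (exp_pos (INR n * u / 2)).
      apply (Rmult_le_reg_r (INR n)); [lra|].
      unfold Rdiv at 2. rewrite Rmult_assoc, Rinv_l; [|lra].
      nra. }
    replace (2 * (INR n + 1) / INR n * ln (F u n / INR n)) with
      ((INR n + 1) * (2 / INR n) * ln (F u n / INR n)) by (field; lra).
    rewrite Hgu. rewrite Rmult_assoc. apply Rmult_le_compat_l; [lra|].
    apply (Rmult_le_reg_r (INR n / 2)); [lra|].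
    replace (2 / INR n * ln (F u n / INR n) * (INR n / 2)) with (ln (F u n / INR n)) by (field; lra).
    lra.
Qed.
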